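(* Let $A,B$ be disjoint subsets of $S$, and let $a\in A$, $b\in B$, $c\in S$ satisfy $r(c,a)>r(a,c)>0$ and $r(c,b)>r(b,c)>0$. Then, as $N\to\infty$, $$\sup_{0\le i\le\lfloor N/2\rfloor}\left|h_{\mathcal{E}_N(A),\mathcal{E}_N(B)}(\zeta_i^{a,c})-1\right|=o(1)\quad\text{and}\quad\sup_{0\le i\le\lfloor N/2\rfloor}h_{\mathcal{E}_N(A),\mathcal{E}_N(B)}(\zeta_i^{b,c})=o(1).$$
   Context: $S$ is a finite set, $r:S\times S\to[0,\infty)$ transition rates of an irreducible continuous-time random walk on $S$ with $r(x,x)=0$, reversible w.r.t. a probability measure $m$. $(d_N)$ positive with $d_N\to0$ and $d_N\log N\to0$. $\mathcal{H}_N=\{\eta\in\mathbb{N}^S:\sum_x\eta_x=N\}$; the inclusion process is the Markov chain on $\mathcal{H}_N$ with generator $(\mathcal{L}_Nf)(\eta)=\sum_{x,y}\eta_x(d_N+\eta_y)r(x,y)\{f(\sigma^{x,y}\eta)-f(\eta)\}$, $\sigma^{x,y}\eta$ moving one particle from $x$ to $y$ if possible. $\xi_N^x$: all $N$ particles at $x$; $\mathcal{E}_N(A)=\{\xi_N^x:x\in A\}$. $h_{\mathcal{A},\mathcal{B}}(\eta)=\mathbb{P}_\eta[\tau_{\mathcal{A}}<\tau_{\mathcal{B}}]$ with $\tau$ hitting times. For $x,y\in S$ and $0\le i\le N$, $\zeta_i^{x,y}$ is the configuration with $N-i$ particles at $x$, $i$ particles at $y$ and none elsewhere. *)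

(* Defs.v *)
From HB Require Import structures.
From mathcomp Require Import all_boot all_order all_algebra.
From mathcomp Require Import all_classical all_reals all_analysis.
Set Implicit Arguments. Unset Strict Implicit. Unset Printing Implicit Defensive.
Import Order.TTheory GRing.Theory Num.Theory numFieldNormedType.Exports.
Local Open Scope ring_scope.

Section Inclusion.
Variables (R : realType) (S : finType).

Definition config := {ffun S -> nat}.

Definition xi (N : nat) (x : S) : config := [ffun z => if z == x then N else 0%N].

Definition zeta (N i : nat) (x y : S) : config :=
  [ffun z => if z == x then (N - i)%N else if z == y then i else 0%N].

Definition EN (N : nat) (A : {set S}) : pred config :=
  fun eta => [exists x in A, eta == xi N x].

Definition sigma (x y : S) (eta : config) : config :=
  if (0 < eta x)%N then
    [ffun z => ((eta z - (z == x)) + (z == y))%N]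
  else eta.

Definition incl_rate (r : S -> S -> R) (dN : R) (eta : config) (x y : S) : R :=
  (eta x)%:R * (dN + (eta y)%:R) * r x y.

Definition incl_total (r : S -> S -> R) (dN : R) (eta : config) : R :=
  \sum_x \sum_y incl_rate r dN eta x y.

(* hitn n eta = P_eta[tau_A < tau_B and tau_A occurs within the first n jumps]
   (hitting probabilities of the continuous-time chain are those of its jump chain;
   if the total rate is 0, eta is absorbing and the sum below is 0 since x/0 = 0) *)
Fixpoint hitn (r : S -> S -> R) (dN : R) (PA PB : pred config) (n : nat)
    (eta : config) : R :=
  if PB eta then 0 else if PA eta then 1 else
  match n with
  | 0 => 0
  | n'.+1 => \sum_x \sum_y (incl_rate r dN eta x y / incl_total r dN eta) *
                           hitn r dN PA PB n' (sigma x y eta)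
  end.

(* h_{A,B}(eta) = P_eta[tau_A < tau_B] = lim_n hitn n eta (nondecreasing limit) *)
Definition hit (r : S -> S -> R) (dN : R) (PA PB : pred config) (eta : config) : R :=
  limn (fun n => hitn r dN PA PB n eta).

End Inclusion.

(* Main.v *)
Require Import Defs.
From HB Require Import structures.
From mathcomp Require Import all_boot all_order all_algebra.
From mathcomp Require Import all_classical all_reals all_analysis.
From mathcomp Require Import zify ring lra.
Import Order.TTheory GRing.Theory Num.Theory numFieldNormedType.Exports.
Local Open Scope ring_scope.


Section Gen.
Variables (R : realType) (S : finType) (r : S -> S -> R) (dN : R).
Hypotheses (r_ge0 : forall x y, 0 <= r x y) (d_ge0 : 0 <= dN).

Lemma rate_ge0 eta x y : 0 <= incl_rate r dN eta x y.
Proof. by rewrite /incl_rate !mulr_ge0 // addr_ge0. Qed.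

Lemma total_ge0 eta : 0 <= incl_total r dN eta.
Proof. by rewrite /incl_total !sumr_ge0 // => x _; rewrite sumr_ge0 // => y _; apply: rate_ge0. Qed.

Lemma wsum_le eta (f : S -> S -> R) : (forall x y, f x y <= 1) ->
  \sum_x \sum_y (incl_rate r dN eta x y / incl_total r dN eta) * f x y <= 1.
Proof.
move=> hf.
apply: (@le_trans _ _ (\sum_x \sum_y (incl_rate r dN eta x y / incl_total r dN eta))).
  apply: ler_sum => x _; apply: ler_sum => y _.
  rewrite -[X in _ <= X]mulr1; apply: ler_wpM2l => //.
  by rewrite divr_ge0 ?rate_ge0 ?total_ge0.
have -> : \sum_x \sum_y (incl_rate r dN eta x y / incl_total r dN eta)
   = incl_total r dN eta / incl_total r dN eta.
  by rewrite /incl_total mulr_suml; apply: eq_bigr => x _; rewrite mulr_suml.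
have [->|nz] := eqVneq (incl_total r dN eta) 0; first by rewrite mul0r.
by rewrite divff.
Qed.

Lemma wsum_ge0 eta (f : S -> S -> R) : (forall x y, 0 <= f x y) ->
  0 <= \sum_x \sum_y (incl_rate r dN eta x y / incl_total r dN eta) * f x y.
Proof.
move=> hf; apply: sumr_ge0 => x _; apply: sumr_ge0 => y _.
by rewrite mulr_ge0 // divr_ge0 ?rate_ge0 ?total_ge0.
Qed.

Lemma hitn_bound PA PB n eta : 0 <= hitn r dN PA PB n eta <= 1.
Proof.
elim: n eta => [|n IH] eta /=.
  by case: (PB eta); case: (PA eta); rewrite /= ?lexx ?ler01.
case: (PB eta); first by rewrite lexx ler01.
case: (PA eta); first by rewrite ler01 lexx.
apply/andP; split.
  by apply: wsum_ge0 => x y; case/andP: (IH (sigma x y eta)).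
by apply: wsum_le => x y; case/andP: (IH (sigma x y eta)).
Qed.

Lemma hitn_mono PA PB n eta : hitn r dN PA PB n eta <= hitn r dN PA PB n.+1 eta.
Proof.
elim: n eta => [|n IH] eta.
  rewrite [X in X <= _]/= [X in _ <= X]/=.
  case: (PB eta) => //; case: (PA eta) => //.
  by apply: wsum_ge0 => x y; case/andP: (hitn_bound PA PB 0 (sigma x y eta)).
rewrite [X in X <= _]/= [X in _ <= X]/=.
case: (PB eta) => //; case: (PA eta) => //.
apply: ler_sum => x _; apply: ler_sum => y _; apply: ler_wpM2l => //.
by rewrite divr_ge0 ?rate_ge0 ?total_ge0.
Qed.

Lemma hitn_nd PA PB eta :
  {homo (fun n => hitn r dN PA PB n eta) : n m / (n <= m)%N >-> n <= m}.
Proof. by apply/nondecreasing_seqP => n; apply: hitn_mono. Qed.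

Lemma hit_cvg PA PB eta : cvgn (fun n => hitn r dN PA PB n eta).
Proof.
apply: nondecreasing_is_cvgn; first exact: hitn_nd.
exists 1 => _ [n _ <-]; by case/andP: (hitn_bound PA PB n eta).
Qed.

Lemma hitn_le_hit PA PB n eta : hitn r dN PA PB n eta <= hit r dN PA PB eta.
Proof. exact: (nondecreasing_cvgn_le (hitn_nd PA PB eta) (hit_cvg PA PB eta)). Qed.

Lemma hit_le1 PA PB eta : hit r dN PA PB eta <= 1.
Proof.
apply: limr_le; first exact: hit_cvg.
by apply: nearW => n; case/andP: (hitn_bound PA PB n eta).
Qed.

Lemma hit_ge0 PA PB eta : 0 <= hit r dN PA PB eta.
Proof.
apply: le_trans (hitn_le_hit PA PB 0 eta).
by case/andP: (hitn_bound PA PB 0 eta).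
Qed.

Lemma hitn_sym PA PB n eta :
  hitn r dN PA PB n eta + hitn r dN PB PA n eta <= 1.
Proof.
elim: n eta => [|n IH] eta /=.
  case: (PB eta); case: (PA eta) => //=; by rewrite ?add0r ?addr0.
case: (PB eta); case: (PA eta) => //=; rewrite ?add0r ?addr0 //.
rewrite -big_split /=.
have -> : \sum_x (\sum_y incl_rate r dN eta x y / incl_total r dN eta *
      hitn r dN PA PB n (sigma x y eta) +
    \sum_y incl_rate r dN eta x y / incl_total r dN eta *
      hitn r dN PB PA n (sigma x y eta)) =
  \sum_x \sum_y incl_rate r dN eta x y / incl_total r dN eta *
      (hitn r dN PA PB n (sigma x y eta) + hitn r dN PB PA n (sigma x y eta)).
  by apply: eq_bigr => x _; rewrite -big_split; apply: eq_bigr => y _; rewrite mulrDr.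
by apply: wsum_le => x y; apply: IH.
Qed.

Lemma hit_sym PA PB eta : hit r dN PA PB eta + hit r dN PB PA eta <= 1.
Proof.
rewrite /hit -limD; [|exact: hit_cvg|exact: hit_cvg].
apply: limr_le; first by apply: is_cvgD; apply: hit_cvg.
by apply: nearW => n; apply: hitn_sym.
Qed.

End Gen.


Section Z.
Variables (R : realType) (S : finType).
Variables (N : nat) (a c : S).
Hypothesis ac : a != c.

Lemma zeta_a i : zeta N i a c a = (N - i)%N.
Proof. by rewrite ffunE eqxx. Qed.
Lemma zeta_c i : zeta N i a c c = i.
Proof. by rewrite ffunE eq_sym (negbTE ac) eqxx. Qed.
Lemma zeta_o i z : z != a -> z != c -> zeta N i a c z = 0%N.
Proof. by move=> /negbTE za /negbTE zc; rewrite ffunE za zc. Qed.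

Lemma zeta0 : zeta N 0 a c = xi N a.
Proof. by apply/ffunP => z; rewrite !ffunE subn0; case: (z == a) => //; case: (z == c). Qed.

Lemma sigma_ca i : (0 < i)%N -> (i <= N)%N -> sigma c a (zeta N i a c) = zeta N i.-1 a c.
Proof.
move=> i0 iN; rewrite /sigma zeta_c i0; apply/ffunP => z; rewrite !ffunE.
have [->|za] := eqVneq z a.
  rewrite (negbTE ac) subn0 /=; lia.
rewrite ?(negbTE za) addn0.
have [_|zc] := eqVneq z c; first by rewrite /= subn1.
by rewrite /= sub0n.
Qed.

Lemma sigma_ac i : (i < N)%N -> sigma a c (zeta N i a c) = zeta N i.+1 a c.
Proof.
move=> iN; rewrite /sigma zeta_a subn_gt0 iN; apply/ffunP => z; rewrite !ffunE.
have [->|za] := eqVneq z a.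
  rewrite /= ?(negbTE ac) ?addn0 /=; lia.
rewrite ?(negbTE za) subn0.
have [_|zc] := eqVneq z c; first by rewrite /= addn1.
by rewrite /= addn0.
Qed.

Lemma EN_mid (X : {set S}) i : (0 < i < N)%N -> EN N X (zeta N i a c) = false.
Proof.
move=> /andP[i0 iN]; apply/negbTE; apply/existsP => -[x /andP[_ /eqP e]].
have ea := congr1 (fun f : config S => f a) e.
have ec := congr1 (fun f : config S => f c) e.
move: ea ec; rewrite /= zeta_a zeta_c !ffunE.
have [<-|xa] := eqVneq a x; last lia.
rewrite eq_sym (negbTE ac); lia.
Qed.

Lemma EN_xi (X : {set S}) x : x \in X -> EN N X (xi N x).
Proof. by move=> xX; apply/existsP; exists x; rewrite xX eqxx. Qed.

Lemma EN_xi_not (X : {set S}) x : (0 < N)%N -> x \notin X -> EN N X (xi N x) = false.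
Proof.
move=> N0 xX; apply/negbTE; apply/existsP => -[y /andP[yX /eqP e]].
have := congr1 (fun f : config S => f x) e; rewrite /= !ffunE eqxx.
have [exy|nxy] := eqVneq x y; first by move: xX; rewrite exy yX.
lia.
Qed.

Lemma sum_zeta i (F : S -> R) :
  \sum_y (zeta N i a c y)%:R * F y = (N - i)%:R * F a + i%:R * F c.
Proof.
rewrite (bigD1 a) //= (bigD1 c) /=; last by rewrite eq_sym.
rewrite zeta_a zeta_c big1 ?addr0 // => z /andP[zc za].
by rewrite zeta_o // mul0r.
Qed.

Lemma total_zeta (r : S -> S -> R) d i : r a a = 0 -> r c c = 0 ->
  incl_total r d (zeta N i a c) =
  (N - i)%:R * (d * \sum_y r a y + i%:R * r a c) +
  i%:R * (d * \sum_y r c y + (N - i)%:R * r c a).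
Proof.
move=> raa rcc.
have -> : incl_total r d (zeta N i a c) =
   \sum_x (zeta N i a c x)%:R * (d * \sum_y r x y + ((N - i)%:R * r x a + i%:R * r x c)).
  apply: eq_bigr => x _; rewrite -(sum_zeta i (r x)) (mulr_sumr _ _ _ d) -big_split mulr_sumr /=.
  by apply: eq_bigr => y _; rewrite /incl_rate; ring.
rewrite sum_zeta raa rcc; ring.
Qed.

Lemma dsum_ge (f : S -> S -> R) x y : x != y -> (forall u v, 0 <= f u v) ->
  f x y + f y x <= \sum_u \sum_v f u v.
Proof.
move=> xy f0.
have s0 : forall u, 0 <= \sum_v f u v by move=> u; apply: sumr_ge0 => *; exact: f0.
have h1 : forall u w, f u w <= \sum_v f u v.
  move=> u w; rewrite (bigD1 w) //= lerDl; apply: sumr_ge0 => *; exact: f0.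
rewrite (bigD1 x) //= (bigD1 y (P := fun u => u != x)) /=; last by rewrite eq_sym.
rewrite addrA; apply: ler_wpDr; first by apply: sumr_ge0 => *; apply: s0.
by apply: lerD; apply: h1.
Qed.
End Z.


Section Real.
Variable R : realType.

Lemma ln_step_lb (y : R) : 0 < y -> (y + 1)^-1 <= ln (y + 1) - ln y.
Proof.
move=> y0.
have y1 : 0 < y + 1 by lra.
have e : y / (y + 1) = 1 + (- (y + 1)^-1) by field; lra.
have h : ln (y / (y + 1)) <= - (y + 1)^-1.
  rewrite e; apply: le_ln1Dx.
  rewrite ltrNl opprK invf_lt1 //; lra.
rewrite ln_div ?posrE // in h; lra.
Qed.

Lemma ln_step_ub (y : R) : 0 < y -> ln (y + 1) - ln y <= y^-1.
Proof.
move=> y0.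
have y1 : 0 < y + 1 by lra.
have e : (y + 1) / y = 1 + y^-1 by field; lra.
rewrite -ln_div ?posrE // e; apply: le_ln1Dx.
have : 0 < y^-1 by rewrite invr_gt0.
lra.
Qed.

Lemma exists_min (w : nat -> R) L : exists2 i, (i <= L)%N & forall j, (j <= L)%N -> w i <= w j.
Proof.
elim: L => [|L [i iL hi]]; first by exists 0%N => // j; rewrite leqn0 => /eqP ->.
have [le|lt] := leP (w i) (w L.+1).
  exists i; first by apply: leqW.
  move=> j; rewrite leq_eqVlt => /orP[/eqP ->//|]; rewrite ltnS; exact: hi.
exists L.+1 => // j; rewrite leq_eqVlt => /orP[/eqP ->//|]; rewrite ltnS => jL.
exact: (le_trans (ltW lt) (hi j jL)).
Qed.

Lemma min_principle (w Z P Q : nat -> R) L :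
  (forall i, (0 < i < L)%N -> 0 < P i /\ 0 <= Q i /\ P i + Q i <= Z i /\
       P i * w i.-1 + Q i * w i.+1 <= Z i * w i) ->
  0 <= w 0%N -> 0 <= w L -> forall i, (i <= L)%N -> 0 <= w i.
Proof.
move=> H w0 wL i iL.
rewrite leNgt; apply/negP => neg.
have [i0 i0L hmin] := exists_min w L.
have wi0 : w i0 < 0 by apply: le_lt_trans (hmin i iL) neg.
have step : forall j, (0 < j)%N -> (j <= i0)%N -> w j = w i0 -> w j.-1 = w i0.
  move=> j j0 ji0 wj.
  have jL : (j < L)%N.
    rewrite ltn_neqAle (leq_trans ji0 i0L) andbT; apply/eqP => jLe.
    by move: wL; rewrite -jLe wj leNgt wi0.
  have [Pp [Qp [PQ ineq]]] := H j (introT andP (conj j0 jL)).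
  have m1 : w i0 <= w j.-1 by apply: hmin; apply: leq_trans (leq_pred _) (ltnW jL).
  have m2 : w i0 <= w j.+1 by apply: hmin.
  have : P j * w j.-1 <= P j * w i0.
    have a1 : Q j * w i0 <= Q j * w j.+1 by apply: ler_wpM2l.
    have a2 : Z j * w i0 <= (P j + Q j) * w i0 by apply: ler_wnM2r => //; apply: ltW.
    rewrite wj in ineq; nra.
  rewrite ler_pM2l // => m3.
  by apply/eqP; rewrite eq_le m3 m1.
have all : forall k, (k <= i0)%N -> w (i0 - k)%N = w i0.
  elim => [|k IH] ki0; first by rewrite subn0.
  have := step (i0 - k)%N; rewrite -subnS => -> //; try lia.
  by apply: IH; lia.
have := all i0 (leqnn _); rewrite subnn => e.
by move: w0; rewrite e leNgt wi0.
Qed.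
End Real.

Section Real2.
Variable R : realType.
Definition phi (rca rac : R) := 2 * rac / (rca + rac).
Definition kap (rca rac M : R) := 8 * M / ((1 - phi rca rac) * rca).
Definition gg (rca rac M d : R) (L j : nat) :=
  1 - phi rca rac ^+ (L - j) - kap rca rac M * d * ln (j.+1)%:R.

Lemma phi_bounds rca rac : 0 < rac -> rac < rca -> 0 < phi rca rac < 1.
Proof.
move=> h1 h2; rewrite /phi; apply/andP; split.
  by rewrite divr_gt0 //; lra.
by rewrite ltr_pdivrMr; lra.
Qed.

Lemma key (rca rac d M : R) (N i L : nat) :
  0 < rac -> rac < rca -> 0 <= d -> 0 <= M -> d * (rca + rac) <= rca - rac ->
  (0 < i)%N -> (i < L)%N -> (4 * L <= 3 * N)%N ->
  (i%:R * (d + (N - i)%:R) * rca + (N - i)%:R * (d + i%:R) * rac) * gg rca rac M d L i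
     + d * N%:R * M <=
  i%:R * (d + (N - i)%:R) * rca * gg rca rac M d L i.-1 +
  (N - i)%:R * (d + i%:R) * rac * gg rca rac M d L i.+1.
Proof.
move=> h1 h2 d0 M0 hd i0 iL hL.
set P := i%:R * (d + (N - i)%:R) * rca.
set Q := (N - i)%:R * (d + i%:R) * rac.
have [ph0 ph1] : 0 < phi rca rac /\ phi rca rac < 1 by apply/andP; apply: phi_bounds.
set φ := phi rca rac in ph0 ph1 *.
set κ := kap rca rac M.
have κe : κ * (1 - φ) = 8 * M / rca.
  rewrite /κ /kap -/φ; field; apply/andP; split; lra.
have κ0 : 0 <= κ.
  rewrite /κ /kap -/φ divr_ge0 //; [lra| apply: mulr_ge0; lra].
set n : R := i%:R.
set m : R := (N - i)%:R.
have n1 : 1 <= n by rewrite /n ler1n.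
have m0 : 0 <= m by rewrite /m.
have hmN : N%:R <= 4 * m.
  have : (N <= 4 * (N - i))%N by lia.
  by rewrite -(ler_nat R) natrM.
set x := φ ^+ (L - i.+1).
have x0 : 0 <= x by rewrite /x exprn_ge0 //; lra.
have e1 : φ ^+ (L - i) = φ * x by rewrite /x -exprS subnSK.
have e2 : φ ^+ (L - i.-1) = φ * (φ * x).
  by rewrite /x -!exprS; congr (_ ^+ _); lia.
set l0 := ln n.
set l1 := ln (n + 1).
set l2 := ln (n + 1 + 1).
have ge1 : gg rca rac M d L i = 1 - φ * x - κ * d * l1.
  by rewrite /gg e1 -/κ /l1 -natr1.
have ge0 : gg rca rac M d L i.-1 = 1 - φ * (φ * x) - κ * d * l0.
  by rewrite /gg e2 -/κ /l0 prednK.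
have ge2 : gg rca rac M d L i.+1 = 1 - x - κ * d * l2.
  by rewrite /gg -/κ /l2 -!natr1.
rewrite ge0 ge1 ge2.
have t0 : 0 < (n + 1)^-1 by rewrite invr_gt0; lra.
have L1 : (n + 1)^-1 <= l1 - l0 by apply: ln_step_lb; lra.
have L2 : l2 - l1 <= (n + 1)^-1 by apply: ln_step_ub; lra.
have P0 : 0 <= P by rewrite /P !mulr_ge0 //; lra.
have Q0 : 0 <= Q by rewrite /Q !mulr_ge0 //; lra.
have QP : Q <= φ * P.
  rewrite /Q /P -/n -/m /φ /phi.
  have s0 : 0 < rca + rac by lra.
  have -> : 2 * rac / (rca + rac) * (n * (d + m) * rca)
          = (d + m) * (2 * n * rca) * rac / (rca + rac).
    by field; lra.
  rewrite ler_pdivlMr //.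
  have A1 : (d + n) * (rca + rac) <= 2 * n * rca by nra.
  have A2 : m <= d + m by lra.
  have A3 : 0 <= (d + n) * (rca + rac) by apply: mulr_ge0; lra.
  have A4 : m * ((d + n) * (rca + rac)) <= (d + m) * (2 * n * rca).
    apply: le_trans (ler_wpM2r A3 A2) _.
    apply: ler_wpM2l; lra.
  have A5 : m * ((d + n) * (rca + rac)) * rac <= (d + m) * (2 * n * rca) * rac.
    by apply: ler_wpM2r; lra.
  by rewrite (_ : m * (d + n) * rac * (rca + rac) = m * ((d + n) * (rca + rac)) * rac); last ring.
have LOG : κ * d * ((1 - φ) * P * (n + 1)^-1) <= κ * d * (P * (l1 - l0) - Q * (l2 - l1)).
  apply: ler_wpM2l; first exact: mulr_ge0.
  have B1 : P * (n + 1)^-1 <= P * (l1 - l0) by apply: ler_wpM2l.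
  have B2 : Q * (l2 - l1) <= Q * (n + 1)^-1 by apply: ler_wpM2l.
  have B3 : (1 - φ) * P * (n + 1)^-1 <= (P - Q) * (n + 1)^-1.
    by apply: ler_wpM2r; [lra | lra].
  lra.
have NM : d * N%:R * M <= κ * d * ((1 - φ) * P * (n + 1)^-1).
  have -> : κ * d * ((1 - φ) * P * (n + 1)^-1) = d * ((κ * (1 - φ)) * P * (n + 1)^-1).
    ring.
  rewrite κe -mulrA; apply: ler_wpM2l => //.
  have -> : 8 * M / rca * P * (n + 1)^-1 = M * (8 * n * (d + m) / (n + 1)).
    rewrite /P -/n -/m; field; apply/andP; split; lra.
  rewrite mulrC; apply: ler_wpM2l => //.
  rewrite ler_pdivlMr; last lra.
  have N0 : (0:R) <= N%:R by [].
  have : N%:R * (n + 1) <= (4 * m) * (2 * n) by apply: ler_pM; lra.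
  nra.
have GEO : 0 <= x * (1 - φ) * (φ * P - Q).
  by apply: mulr_ge0; [apply: mulr_ge0; lra | lra].
have E : P * (1 - φ * (φ * x) - κ * d * l0) + Q * (1 - x - κ * d * l2)
   - ((P + Q) * (1 - φ * x - κ * d * l1))
   = x * (1 - φ) * (φ * P - Q) + κ * d * (P * (l1 - l0) - Q * (l2 - l1)).
  ring.
lra.
Qed.
End Real2.


Section H.
Variables (R : realType) (S : finType) (r : S -> S -> R) (d : R).
Hypotheses (r_ge0 : forall x y, 0 <= r x y) (d_ge0 : 0 <= d).

Lemma hit_one (PA PB : pred (config S)) eta : PA eta -> PB eta = false -> hit r d PA PB eta = 1.
Proof.
move=> hA hB.
rewrite /hit (_ : (fun n => hitn r d PA PB n eta) = fun _ => 1).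
  exact: lim_cst.
by apply: funext => -[|n] /=; rewrite hB hA.
Qed.

Variables (N : nat) (a c : S).
Hypothesis ac : a != c.

Lemma h_ineq (A B : {set S}) i : (0 < i < N)%N -> 0 < r c a ->
  incl_rate r d (zeta N i a c) c a * hit r d (EN N A) (EN N B) (zeta N i.-1 a c) +
  incl_rate r d (zeta N i a c) a c * hit r d (EN N A) (EN N B) (zeta N i.+1 a c)
  <= incl_total r d (zeta N i a c) * hit r d (EN N A) (EN N B) (zeta N i a c).
Proof.
move=> /andP[i0 iN] rca0.
set eta := zeta N i a c.
set Pc := incl_rate r d eta c a.
set Qc := incl_rate r d eta a c.
set Z := incl_total r d eta.
have PQZ : Pc + Qc <= Z.
  rewrite /Pc /Qc /Z /incl_total; apply: (@dsum_ge R S (fun x y => incl_rate r d eta x y) c a).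
    by rewrite eq_sym.
  by move=> u v; apply: rate_ge0.
have Pc0 : 0 < Pc.
  rewrite /Pc /incl_rate /eta zeta_c // zeta_a mulr_gt0 // mulr_gt0 //.
    by rewrite ltr0n.
  by apply: ltr_wpDl => //; rewrite ltr0n subn_gt0.
have Qc0 : 0 <= Qc by apply: rate_ge0.
have Z0 : 0 < Z by lra.
set f1 := fun n => hitn r d (EN N A) (EN N B) n (zeta N i.-1 a c).
set f2 := fun n => hitn r d (EN N A) (EN N B) n (zeta N i.+1 a c).
have un : forall n, Pc / Z * f1 n + Qc / Z * f2 n <= hit r d (EN N A) (EN N B) eta.
  move=> n; apply: le_trans (hitn_le_hit _ _ r d r_ge0 d_ge0 (EN N A) (EN N B) n.+1 eta).
  rewrite /= /eta !(EN_mid _ _ _ _ ac) ?i0 ?iN //.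
  have := @dsum_ge R S (fun x y => incl_rate r d eta x y / incl_total r d eta *
       hitn r d (EN N A) (EN N B) n (sigma x y eta)) c a.
  rewrite /= /eta sigma_ca ?sigma_ac // ?(ltnW iN) //.
  apply; first by rewrite eq_sym.
  move=> u v; rewrite mulr_ge0 ?divr_ge0 ?rate_ge0 ?total_ge0 //.
  by case/andP: (hitn_bound _ _ r d r_ge0 d_ge0 (EN N A) (EN N B) n (sigma u v (zeta N i a c))).
have cu : ((fun n => Pc / Z * f1 n + Qc / Z * f2 n) @ \oo -->
     Pc / Z * hit r d (EN N A) (EN N B) (zeta N i.-1 a c) +
     Qc / Z * hit r d (EN N A) (EN N B) (zeta N i.+1 a c))%classic.
  by apply: cvgD; apply: cvgMr; apply: (hit_cvg _ _ r d r_ge0 d_ge0).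
set h1 := hit r d (EN N A) (EN N B) (zeta N i.-1 a c).
set h2 := hit r d (EN N A) (EN N B) (zeta N i.+1 a c).
have h : Pc / Z * h1 + Qc / Z * h2 <= hit r d (EN N A) (EN N B) eta.
  rewrite -(cvg_lim _ cu) //; apply: limr_le; first exact: cvgP cu.
  exact: nearW.
have e1 : Z * (Pc / Z * h1 + Qc / Z * h2) = Pc * h1 + Qc * h2.
  by field; rewrite gt_eqF.
by rewrite -e1; apply: ler_wpM2l => //; apply: ltW.
Qed.
End H.


Arguments phi {R}. Arguments kap {R}. Arguments gg {R}.
Arguments key {R rca rac d M N i L}. Arguments min_principle {R}.
Arguments hit_ge0 {R S}. Arguments hit_le1 {R S}. Arguments h_ineq {R S r d}.

Lemma nat_facts N1 N2 K N i : (N1 + N2 + 4 * K + 8 <= N)%N -> (i <= N./2)%N ->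
  [/\ (N1 <= N)%N /\ (N2 <= N)%N, (4 * ((3 * N) %/ 4) <= 3 * N)%N, (i < (3 * N) %/ 4)%N,
      ((3 * N) %/ 4 < N)%N & (K <= (3 * N) %/ 4 - i)%N].
Proof. move=> h1 h2; split; try split; lia. Qed.

Lemma part1 (R : realType) (S : finType) (r : S -> S -> R) (d : nat -> R)
 (r_ge0 : forall x y, 0 <= r x y) (r_diag : forall x, r x x = 0)
 (d_pos : forall N, 0 < d N) (d_lim : (d @ \oo --> 0)%classic)
 (dlog_lim : ((fun N => d N * ln N%:R) @ \oo --> 0)%classic)
 (A B : {set S}) (a c : S) (aA : a \in A) (naB : a \notin B) (hac : 0 < r a c < r c a) :
 forall eps : R, 0 < eps -> exists N0 : nat, forall N : nat, (N0 <= N)%N ->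
     forall i : nat, (i <= N./2)%N ->
       `|hit r (d N) (EN N A) (EN N B) (zeta N i a c) - 1| <= eps.
Proof.
move=> eps e0.
case/andP: hac => hac1 hac2.
have ac : a != c by apply/eqP => e; move: hac1; rewrite e r_diag ltxx.
set rca := r c a in hac2 *.
set rac := r a c in hac1 hac2 *.
set Ra := \sum_y r a y.
set Rc := \sum_y r c y.
have Ra0 : 0 <= Ra by apply: sumr_ge0.
have Rc0 : 0 <= Rc by apply: sumr_ge0.
set M := Ra + Rc.
have M0 : 0 <= M by apply: addr_ge0.
have [ph0 ph1] : 0 < phi rca rac /\ phi rca rac < 1 by apply/andP; apply: phi_bounds.
set κ := kap rca rac M.
have κ0 : 0 <= κ.
  rewrite /κ /kap divr_ge0 //; [lra| apply: mulr_ge0; lra].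
have [N1 _ HN1] : (\forall N \near \oo, `|0 - d N| <= (rca - rac) / (rca + rac))%classic.
  move/cvgrPdist_le : d_lim; apply; rewrite divr_gt0 //; lra.
have [N2 _ HN2] : (\forall N \near \oo, `|0 - d N * ln N%:R| <= eps / (2 * (κ + 1)))%classic.
  move/cvgrPdist_le : dlog_lim; apply; rewrite divr_gt0 //; lra.
have [K _ HK] : (\forall k \near \oo, `|0 - phi rca rac ^+ k| <= eps / 2)%classic.
  have : `|phi rca rac| < 1 by rewrite ger0_norm //; lra.
  move/cvg_expr/cvgrPdist_le; apply; lra.
exists (N1 + N2 + 4 * K + 8)%N => N hN i hi.
have [[hN1 hN2] hL iL LN KL] := nat_facts _ _ _ _ _ hN hi.
have hd1 : `|0 - d N| <= (rca - rac) / (rca + rac) by apply: HN1.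
have hd2 : `|0 - d N * ln N%:R| <= eps / (2 * (κ + 1)) by apply: HN2.
set dN := d N in hd1 hd2 *.
have dN0 : 0 < dN by apply: d_pos.
have hd : dN * (rca + rac) <= rca - rac.
  move: hd1; rewrite sub0r normrN ger0_norm; last lra.
  by rewrite ler_pdivlMr //; lra.
set L := ((3 * N) %/ 4)%N in hL iL LN KL *.
set g := gg rca rac M dN L.
set w := fun j => hit r dN (EN N A) (EN N B) (zeta N j a c) - g j.
have gle1 : forall j, g j <= 1.
  move=> j; rewrite /g /gg -/κ.
  have t1 : 0 <= phi rca rac ^+ (L - j) by rewrite exprn_ge0 //; lra.
  have t2 : 0 <= κ * dN * ln (j.+1)%:R.
    apply: mulr_ge0; [apply: mulr_ge0 => //; exact: ltW | by apply: ln_ge0; rewrite ler1n].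
  lra.
have : 0 <= w i.
  apply: (min_principle w (fun j => incl_total r dN (zeta N j a c))
   (fun j => incl_rate r dN (zeta N j a c) c a)
   (fun j => incl_rate r dN (zeta N j a c) a c) L _ _ _ i (ltnW iL)).
  - move=> j /andP[j0 jL] /=.
    have jN : (j < N)%N := ltn_trans jL LN.
    have Pe : incl_rate r dN (zeta N j a c) c a = j%:R * (dN + (N - j)%:R) * rca.
      by rewrite /incl_rate zeta_c // zeta_a.
    have Qe : incl_rate r dN (zeta N j a c) a c = (N - j)%:R * (dN + j%:R) * rac.
      by rewrite /incl_rate zeta_c // zeta_a.
    have PQZ : incl_rate r dN (zeta N j a c) c a + incl_rate r dN (zeta N j a c) a c
         <= incl_total r dN (zeta N j a c).
      apply: (@dsum_ge R S (fun x y => incl_rate r dN (zeta N j a c) x y) c a).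
        by rewrite eq_sym.
      by move=> u v; apply: rate_ge0 => //; apply: ltW.
    have HI := h_ineq r_ge0 (ltW dN0) _ _ _ ac A B _ (introT andP (conj j0 jN)) (lt_trans hac1 hac2).
    have KEY' := key hac1 hac2 (ltW dN0) M0 hd j0 jL hL.
    have n1 : (1 : R) <= j%:R by rewrite ler1n.
    set n : R := j%:R in Pe Qe KEY' n1 *.
    set m : R := (N - j)%:R in Pe Qe KEY' *.
    have m0 : 0 <= m by rewrite /m.
    have Nnm : N%:R = n + m :> R by rewrite /n /m -natrD subnKC // ltnW.
    have ZK : incl_total r dN (zeta N j a c) <=
        incl_rate r dN (zeta N j a c) c a + incl_rate r dN (zeta N j a c) a c + dN * N%:R * M.
      rewrite (@total_zeta R S N a c ac) ?r_diag // Pe Qe -/n -/m -/Ra -/Rc -/rca -/rac Nnm /M.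
      have t1 : 0 <= m * dN * Rc by rewrite !mulr_ge0 //; lra.
      have t2 : 0 <= n * dN * Ra by rewrite !mulr_ge0 //; lra.
      have t3 : 0 <= n * dN * rca by rewrite !mulr_ge0 //; lra.
      have t4 : 0 <= m * dN * rac by rewrite !mulr_ge0 //; lra.
      have E : (n * (dN + m) * rca + m * (dN + n) * rac + dN * (n + m) * (Ra + Rc)) -
           (m * (dN * Ra + n * rac) + n * (dN * Rc + m * rca)) =
           m * dN * Rc + n * dN * Ra + n * dN * rca + m * dN * rac by ring.
      lra.
    set P := incl_rate r dN (zeta N j a c) c a in Pe PQZ ZK HI *.
    set Q := incl_rate r dN (zeta N j a c) a c in Qe PQZ ZK HI *.
    set Z := incl_total r dN (zeta N j a c) in PQZ ZK HI *.
    rewrite -Pe -Qe in KEY'.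
    have P0 : 0 < P.
      by rewrite Pe !mulr_gt0 //; lra.
    have Q0 : 0 <= Q by rewrite /Q; apply: rate_ge0 => //; apply: ltW.
    split => //; split => //; split => //.
    have G : Z * g j <= (P + Q) * g j + dN * N%:R * M.
      have : (Z - (P + Q)) * g j <= (Z - (P + Q)) * 1.
        by apply: ler_wpM2l; [lra | apply: gle1].
      lra.
    rewrite /w /g -/g.
    have E : P * (hit r dN (EN N A) (EN N B) (zeta N j.-1 a c) - g j.-1) +
       Q * (hit r dN (EN N A) (EN N B) (zeta N j.+1 a c) - g j.+1) =
       (P * hit r dN (EN N A) (EN N B) (zeta N j.-1 a c) +
        Q * hit r dN (EN N A) (EN N B) (zeta N j.+1 a c)) - (P * g j.-1 + Q * g j.+1).
      ring.
    have E2 : Z * (hit r dN (EN N A) (EN N B) (zeta N j a c) - g j) =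
       Z * hit r dN (EN N A) (EN N B) (zeta N j a c) - Z * g j by ring.
    rewrite E E2.
    change (gg rca rac M dN L) with g in KEY'.
    lra.
  - rewrite /w zeta0 hit_one //.
      by have := gle1 0%N; lra.
    + exact: EN_xi.
    + exact: (@EN_xi_not S N a c ac B a (leq_ltn_trans (leq0n L) LN) naB).
  - rewrite /w.
    have := hit_ge0 r dN r_ge0 (ltW dN0) (EN N A) (EN N B) (zeta N L a c).
    have : g L <= 0.
      rewrite /g /gg subnn expr0 -/κ subrr sub0r oppr_le0.
      apply: mulr_ge0; [apply: mulr_ge0 => //; exact: ltW | by apply: ln_ge0; rewrite ler1n].
    lra.
rewrite /w => hw.
have hgi : 1 - eps <= g i.
  rewrite /g /gg -/κ.
  have h1 : phi rca rac ^+ (L - i) <= eps / 2.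
    have := HK (L - i)%N KL; rewrite sub0r normrN ger0_norm //.
    by rewrite exprn_ge0 //; lra.
  have h2 : ln (i.+1)%:R <= ln N%:R :> R.
    rewrite ler_ln ?posrE ?ltr0n ?ler_nat //; [exact: ltn_trans iL LN | exact: leq_ltn_trans (leq0n L) LN].
  have h3 : dN * ln N%:R <= eps / (2 * (κ + 1)).
    by apply: le_trans hd2; rewrite sub0r normrN ler_norm.
  have h4 : κ * (eps / (2 * (κ + 1))) <= eps / 2.
    have E : eps / 2 - κ * (eps / (2 * (κ + 1))) = eps / (2 * (κ + 1)).
      by field; lra.
    have : 0 <= eps / (2 * (κ + 1)) by rewrite divr_ge0 //; lra.
    lra.
  have h5 : κ * dN * ln (i.+1)%:R <= κ * (dN * ln N%:R).
    by rewrite -mulrA; apply: ler_wpM2l => //; apply: ler_wpM2l => //; lra.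
  have h6 : κ * (dN * ln N%:R) <= κ * (eps / (2 * (κ + 1))) by apply: ler_wpM2l.
  lra.
have hle := hit_le1 r dN r_ge0 (ltW dN0) (EN N A) (EN N B) (zeta N i a c).
rewrite distrC ger0_norm; lra.
Qed.


Theorem lemma4p4 (R : realType) (S : finType) (r : S -> S -> R) (m : S -> R)
    (d : nat -> R)
    (r_ge0 : forall x y, 0 <= r x y)
    (r_diag : forall x, r x x = 0)
    (r_irr : forall x y, connect (fun u v => 0 < r u v) x y)
    (m_ge0 : forall x, 0 <= m x)
    (m_sum : \sum_x m x = 1)
    (m_rev : forall x y, m x * r x y = m y * r y x)
    (d_pos : forall N, 0 < d N)
    (d_lim : (d @ \oo --> 0)%classic)
    (dlog_lim : ((fun N => d N * ln N%:R) @ \oo --> 0)%classic)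
    (A B : {set S}) (AB : [disjoint A & B]) (a b c : S)
    (aA : a \in A) (bB : b \in B)
    (hac : 0 < r a c < r c a) (hbc : 0 < r b c < r c b) :
  (forall eps : R, 0 < eps -> exists N0 : nat, forall N : nat, (N0 <= N)%N ->
     forall i : nat, (i <= N./2)%N ->
       `|hit r (d N) (EN N A) (EN N B) (zeta N i a c) - 1| <= eps)
  /\
  (forall eps : R, 0 < eps -> exists N0 : nat, forall N : nat, (N0 <= N)%N ->
     forall i : nat, (i <= N./2)%N ->
       `|hit r (d N) (EN N A) (EN N B) (zeta N i b c)| <= eps).
Proof.
have naB : a \notin B by rewrite (disjointFr AB aA).
have nbA : b \notin A by rewrite (disjointFl AB bB).
split.
  exact: (@part1 R S r d r_ge0 r_diag d_pos d_lim dlog_lim A B a c aA naB hac).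
move=> eps e0.
have [N0 HN] := @part1 R S r d r_ge0 r_diag d_pos d_lim dlog_lim B A b c bB nbA hbc eps e0.
exists N0 => N hN i hi.
have h1 := HN N hN i hi.
have hs := @hit_sym R S r (d N) r_ge0 (ltW (d_pos N)) (EN N A) (EN N B) (zeta N i b c).
have h0 := hit_ge0 r (d N) r_ge0 (ltW (d_pos N)) (EN N A) (EN N B) (zeta N i b c).
have hl := hit_le1 r (d N) r_ge0 (ltW (d_pos N)) (EN N B) (EN N A) (zeta N i b c).
rewrite (ger0_norm h0).
have e : `|hit r (d N) (EN N B) (EN N A) (zeta N i b c) - 1| =
   1 - hit r (d N) (EN N B) (EN N A) (zeta N i b c).
  by rewrite distrC ger0_norm // subr_ge0.
rewrite e in h1; lra.
Qed.
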